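(* Let $X$ be a real Banach space with continuous dual $X^*$. Let $A\colon X\rightrightarrows X^*$ be maximal monotone and at most single-valued, and let $C$ be a nonempty closed convex subset of $X$. Suppose that $A|_{\operatorname{dom}A}$ is linear (i.e., $\operatorname{dom}A$ is a linear subspace and $A$, viewed as a map $\operatorname{dom}A\to X^*$, is linear), and that $\operatorname{dom}A\cap\operatorname{int}C\neq\varnothing$. Then $A+N_C$ is maximal monotone.
   Context: $\langle\cdot,\cdot\rangle$ denotes the pairing between $X$ and $X^*$. For a set-valued operator $A\colon X\rightrightarrows X^*$, $\operatorname{gra}A=\{(x,x^* )\in X\times X^*: x^*\in Ax\}$ and $\operatorname{dom}A=\{x: Ax\neq\varnothing\}$. $A$ is at most single-valued if for every $x$, $Ax$ is empty or a singleton; it is then identified with a map $\operatorname{dom}A\to X^*$. $A$ is monotone if $\langle x-y,x^*-y^*\rangle\ge 0$ for all $(x,x^* ),(y,y^* )\in\operatorname{gra}A$, and maximal monotone if it is monotone and no monotone operator has a graph properly containing $\operatorname{gra}A$. The normal cone operator of $C$ is $N_C(x)=\{x^*\in X^*:\sup_{c\in C}\langle c-x,x^*\rangle\le 0\}$ if $x\in C$ and $N_C(x)=\varnothing$ otherwise. $(A+N_C)x=\{a^*+b^*: a^*\in Ax,\ b^*\in N_C(x)\}$. *)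

(* Defs.v *)
From HB Require Import structures.
From mathcomp Require Import all_boot all_order all_algebra.
From mathcomp Require Import all_classical all_reals all_analysis.
Set Implicit Arguments. Unset Strict Implicit. Unset Printing Implicit Defensive.
Import Order.TTheory GRing.Theory Num.Theory.
Import numFieldNormedType.Exports.
Local Open Scope classical_set_scope.
Local Open Scope ring_scope.

(* Elements of the continuous dual X^* are represented as functions X -> R
   that are linear and continuous; the pairing <x, x^*> is x^* x. *)
Definition is_dual (R : realType) (X : normedModType R) (f : X -> R) : Prop :=
  (forall (a : R) (x y : X), f (a *: x + y) = a * f x + f y) /\ continuous f.

Definition operator (R : realType) (X : normedModType R) := X -> set (X -> R).

Definition into_dual (R : realType) (X : normedModType R) (A : operator X) : Prop :=
  forall x f, A x f -> is_dual f.

Definition dom (R : realType) (X : normedModType R) (A : operator X) : set X :=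
  [set x | exists f, A x f].

Definition at_most_single_valued (R : realType) (X : normedModType R)
  (A : operator X) : Prop :=
  forall x f g, A x f -> A x g -> f = g.

Definition monotone (R : realType) (X : normedModType R) (A : operator X) : Prop :=
  forall x y f g, A x f -> A y g -> 0 <= f (x - y) - g (x - y).

Definition gra_sub (R : realType) (X : normedModType R) (A B : operator X) : Prop :=
  forall x f, A x f -> B x f.

Definition maximal_monotone (R : realType) (X : normedModType R)
  (A : operator X) : Prop :=
  into_dual A /\ monotone A /\
  forall B : operator X, into_dual B -> monotone B -> gra_sub A B -> gra_sub B A.

Definition normal_cone (R : realType) (X : normedModType R) (C : set X) : operator X :=
  fun x f => C x /\ is_dual f /\ (forall c, C c -> f (c - x) <= 0).

Definition op_sum (R : realType) (X : normedModType R) (A B : operator X) : operator X :=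
  fun x h => exists f g, A x f /\ B x g /\ h = (fun z => f z + g z).

Definition is_convex_set (R : realType) (X : normedModType R) (C : set X) : Prop :=
  forall x y (t : R), C x -> C y -> 0 <= t -> t <= 1 -> C (t *: x + (1 - t) *: y).

Definition dom_subspace (R : realType) (X : normedModType R) (A : operator X) : Prop :=
  dom A 0 /\ forall (a : R) x y, dom A x -> dom A y -> dom A (a *: x + y).

Definition linear_on_dom (R : realType) (X : normedModType R) (A : operator X) : Prop :=
  forall (a : R) x y f g, A x f -> A y g -> A (a *: x + y) (fun z => a * f z + g z).

(* Main.v *)
Require Import Defs.
From HB Require Import structures.
From mathcomp Require Import all_boot all_order all_algebra.
From mathcomp Require Import all_classical all_reals all_analysis.
From mathcomp Require Import ring lra.
Require Import Defs.
Import Order.TTheory GRing.Theory Num.Theory.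
Import numFieldNormedType.Exports.
Local Open Scope classical_set_scope.
Local Open Scope ring_scope.

Lemma inv_pos {R : realType} {t : R} : 0 < t -> 0 < t^-1.
Proof. by rewrite invr_gt0. Qed.

Section HahnBanach.
Variables (R : realType) (V : lmodType R) (p : V -> R).
Hypothesis p_ge0 : forall x, 0 <= p x.
Hypothesis p_add : forall x y, p (x + y) <= p x + p y.
Hypothesis p_scale : forall t x, 0 < t -> p (t *: x) <= t * p x.
Variable x1 : V.

Lemma p_scale_ge t x : 0 < t -> t * p x <= p (t *: x).
Proof.
move=> t0; have := p_scale (t^-1) (t *: x) (inv_pos t0).
rewrite scalerA mulVf ?gt_eqF // scale1r => h.
by rewrite -(ler_pM2l (inv_pos t0)) mulrA mulVf ?gt_eqF // mul1r.
Qed.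

Definition Qg (G : set (V * R)) :=
  [/\ (forall x r s, G (x, r) -> G (x, s) -> r = s),
      (forall a x y r s, G (x, r) -> G (y, s) -> G (a *: x + y, a * r + s)),
      (forall x r, G (x, r) -> r <= p x) & G (x1, p x1)].

Definition G0 : set (V * R) := [set w | exists t, w = (t *: x1, t * p x1)].

Lemma p0 : p 0 = 0.
Proof.
apply/eqP; rewrite eq_le p_ge0 andbT.
have := p_scale (2^-1) 0 ltac:(by rewrite invr_gt0); rewrite scaler0 => h.
have := p_ge0 0; lra.
Qed.

Lemma scale_ge t : t * p x1 <= p (t *: x1).
Proof.
case: (ltrgtP t 0) => [tn|tp|->].
- by apply: le_trans (p_ge0 _); rewrite nmulr_rle0 // p_ge0.
- exact: p_scale_ge.
- by rewrite mul0r scale0r p0.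
Qed.

Lemma Q_G0 : Qg G0.
Proof.
split.
- move=> x r s [t [-> ->]] [u [eu ->]].
  have [x10|x1n0] := eqVneq x1 0.
    by rewrite x10 p0 !mulr0.
  have : (t - u) *: x1 = 0 by rewrite scalerBl eu subrr.
  by move/eqP; rewrite scaler_eq0 (negbTE x1n0) orbF subr_eq0 => /eqP ->.
- move=> a x y r s [t [-> ->]] [u [-> ->]]; exists (a * t + u).
  by rewrite scalerDl scalerA mulrDl mulrA.
- by move=> x r [t [-> ->]]; exact: scale_ge.
- by exists 1; rewrite scale1r mul1r.
Qed.

Lemma HB_exists : exists f : V -> R,
  [/\ (forall a x y, f (a *: x + y) = a * f x + f y),
      (forall x, f x <= p x) & f x1 = p x1].
Proof.
pose P := [set G : set (V * R) | Qg (G `|` G0)].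
have chainP : forall F : set (set (V * R)), F `<=` P -> total_on F subset ->
    P (\bigcup_(X in F) X).
  move=> F FP Ftot.
  have key : forall w, (\bigcup_(X in F) X `|` G0) w ->
      exists X, (F X \/ X = set0) /\ (X `|` G0) w.
    move=> w [[X FX Xw]|G0w]; first by exists X; split; [left|left].
    by exists set0; split; [right|right].
  have QX : forall X, (F X \/ X = set0) -> Qg (X `|` G0).
    by move=> X [/FP //|->]; rewrite set0U; exact: Q_G0.
  have sub : forall X, (F X \/ X = set0) ->
      X `|` G0 `<=` \bigcup_(X in F) X `|` G0.
    move=> X [FX|->] w [Xw|G0w]; [left; exists X | right | by [] | right] => //.
  have two : forall w1 w2, (\bigcup_(X in F) X `|` G0) w1 ->
      (\bigcup_(X in F) X `|` G0) w2 ->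
      exists X, (F X \/ X = set0) /\ (X `|` G0) w1 /\ (X `|` G0) w2.
    move=> w1 w2 /key [X1 [FX1 h1]] /key [X2 [FX2 h2]].
    case: FX1 => [FX1|X10]; last first.
      exists X2; split=> //; split=> //; move: h1; rewrite X10 set0U => h1; by right.
    case: FX2 => [FX2|X20]; last first.
      exists X1; split; [by left|split=> //]; move: h2; rewrite X20 set0U; by right.
    case: (Ftot _ _ FX1 FX2) => [s12|s21].
      exists X2; split; [by left|split=> //]; case: h1 => [/s12|]; [left|right] => //.
    exists X1; split; [by left|split=> //]; case: h2 => [/s21|]; [left|right] => //.
  split.
  - move=> x r s h1 h2; have [X [FX [k1 k2]]] := two _ _ h1 h2.
    by case: (QX _ FX) => Q1 _ _ _; exact: Q1 k1 k2.
  - move=> a x y r s h1 h2; have [X [FX [k1 k2]]] := two _ _ h1 h2.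
    by case: (QX _ FX) => _ Q2 _ _; apply: (sub _ FX); exact: Q2.
  - move=> x r /key [X [FX k]].
    by case: (QX _ FX) => _ _ Q3 _; exact: Q3 k.
  - by right; exists 1; rewrite scale1r mul1r.
have [A [PA Amax]] := Zorn_bigcup chainP.
pose H := A `|` G0.
have [Q1 Q2 Q3 Q4] : Qg H := PA.
have H00 : H (0, 0).
  have := Q2 (-1) _ _ _ _ Q4 Q4.
  by rewrite scaleN1r addNr mulN1r addNr.
have Hsc : forall a x r, H (x, r) -> H (a *: x, a * r).
  by move=> a x r h; have := Q2 a _ _ _ _ h H00; rewrite addr0 addr0.
have dom : forall x, exists r, H (x, r).
  move=> x2; apply: contrapT => nx2.
  have nx2' : forall r, ~ H (x2, r) by move=> r h; apply: nx2; exists r.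
  pose S := [set v | exists y s, H (y, s) /\ v = s - p (y - x2)].
  have ub : forall y s x r, H (y, s) -> H (x, r) -> s - p (y - x2) <= p (x + x2) - r.
    move=> y s x r hy hx; have := Q3 _ _ (Q2 1 _ _ _ _ hx hy).
    rewrite scale1r mul1r => h.
    have := p_add (x + x2) (y - x2).
    have -> : x + x2 + (y - x2) = x + y by rewrite addrACA subrr addr0.
    lra.
  have S0 : S !=set0 by exists (0 - p (0 - x2)), 0, 0.
  have Sub : ubound S (p (0 + x2) - 0) by move=> v [y [s [hy ->]]]; exact: ub hy H00.
  have hsup : has_sup S by split=> //; exists (p (0 + x2) - 0).
  pose c := sup S.
  have c_ub : forall x r, H (x, r) -> c <= p (x + x2) - r.
    by move=> x r hx; apply: ge_sup => // v [y [s [hy ->]]]; exact: ub hy hx.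
  have c_lb : forall y s, H (y, s) -> s - p (y - x2) <= c.
    move=> y s hy; have hS : S (s - p (y - x2)) by exists y, s.
    by have := ub_le_sup (proj2 hsup) hS.
  pose H' := [set w | exists x r t, H (x, r) /\ w = (x + t *: x2, r + t * c)].
  have HH' : H `<=` H'.
    by move=> [x r] h; exists x, r, 0; rewrite scale0r mul0r !addr0.
  have QH' : Qg H'.
    split.
    - move=> x r s [y1 [r1 [t1 [h1 [e1 e2]]]]] [y2 [r2 [t2 [h2 [e3 e4]]]]].
      have [tt|tn] := eqVneq t1 t2.
        subst t2; have ey : y1 = y2 by apply: (addIr (t1 *: x2)); rewrite -e1 -e3.
        subst y2; by rewrite e2 e4 (Q1 _ _ _ h1 h2).
      exfalso; apply: (nx2' ((t1 - t2)^-1 * (r2 - r1))).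
      have hd := Q2 (-1) _ _ _ _ h1 h2.
      have := Hsc ((t1 - t2)^-1) _ _ hd.
      have -> : (t1 - t2)^-1 *: (-1 *: y1 + y2) = x2.
        have : (t1 - t2) *: x2 = -1 *: y1 + y2.
          have e : y1 + t1 *: x2 = y2 + t2 *: x2 by rewrite -e1 -e3.
          rewrite scaleN1r scalerBl; apply/eqP; rewrite subr_eq; apply/eqP.
          by apply: (addrI y1); rewrite addrA e !addrA addrN add0r.
        move=> <-; rewrite scalerA mulVf ?scale1r // subr_eq0 //.
      by rewrite mulN1r (addrC (- r1)).
    - move=> a x y r s [y1 [r1 [t1 [h1 [-> ->]]]]] [y2 [r2 [t2 [h2 [-> ->]]]]].
      exists (a *: y1 + y2), (a * r1 + r2), (a * t1 + t2); split; first exact: Q2.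
      congr (_, _).
        by rewrite scalerDr scalerA scalerDl addrACA.
      by rewrite mulrDr mulrA mulrDl addrACA.
    - move=> x r [y [s [t [hy [-> ->]]]]].
      case: (ltrgtP t 0) => [tn|tp|->]; last by rewrite scale0r mul0r !addr0; exact: Q3.
      + have u0 : 0 < - t by rewrite oppr_gt0.
        have hl := c_lb _ _ (Hsc ((- t)^-1) _ _ hy).
        have e : (- t) *: ((- t)^-1 *: y - x2) = y + t *: x2.
          by rewrite scalerBr scalerA mulfV ?gt_eqF // scale1r scaleNr opprK.
        have := p_scale_ge (- t) ((- t)^-1 *: y - x2) u0; rewrite e => h2.
        have : - t * ((- t)^-1 * s - p ((- t)^-1 *: y - x2)) <= - t * c.
          by rewrite ler_pM2l.
        rewrite mulrBr mulrA mulfV ?gt_eqF // mul1r; lra.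
      + have hu := c_ub _ _ (Hsc (t^-1) _ _ hy).
        have e : t *: (t^-1 *: y + x2) = y + t *: x2.
          by rewrite scalerDr scalerA mulfV ?gt_eqF // scale1r.
        have := p_scale_ge t (t^-1 *: y + x2) tp; rewrite e => h2.
        have : t * c <= t * (p (t^-1 *: y + x2) - t^-1 * s) by rewrite ler_pM2l.
        rewrite mulrBr mulrA mulfV ?gt_eqF // mul1r; lra.
    - exact: HH'.
  have H'U : H' `|` G0 = H'.
    by apply/seteqP; split=> [w [//|g]|w h]; [apply: HH'; right|left].
  apply: (Amax H'); last by rewrite /P /= H'U.
  split; first by move=> w Aw; apply: HH'; left.
  move=> sub; have : H' (x2, c).
    by exists 0, 0, 1; rewrite add0r scale1r mul1r add0r.
  move/sub => Ax2; apply: (nx2' c); by left.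
pose f x := proj1_sig (cid (dom x)).
have Hf : forall x, H (x, f x) by move=> x; rewrite /f; case: cid.
exists f; split.
- by move=> a x y; apply: (Q1 (a *: x + y)); [exact: Hf|exact: Q2].
- by move=> x; exact: Q3.
- exact: (Q1 x1).
Qed.

End HahnBanach.

Section Lin.
Variables (R : realType) (V : lmodType R) (f : V -> R).
Hypothesis flin : forall a x y, f (a *: x + y) = a * f x + f y.
Lemma lin0 : f 0 = 0.
Proof. have := flin 1 0 0; rewrite scale1r addr0 mul1r => h; lra. Qed.
Lemma linD x y : f (x + y) = f x + f y.
Proof. by rewrite -{1}(scale1r x) flin mul1r. Qed.
Lemma linZ a x : f (a *: x) = a * f x.
Proof. by rewrite -(addr0 (a *: x)) flin lin0 addr0. Qed.
Lemma linN x : f (- x) = - f x.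
Proof. by rewrite -scaleN1r linZ mulN1r. Qed.
Lemma linB x y : f (x - y) = f x - f y.
Proof. by rewrite linD linN. Qed.
End Lin.
Arguments lin0 {R V f}. Arguments linD {R V f}. Arguments linZ {R V f}.
Arguments linN {R V f}. Arguments linB {R V f}.

Definition opn {R : realType} {X : normedModType R} (U : set X) :=
  forall x, U x -> exists2 r, 0 < r & forall y, `|x - y| < r -> U y.

Section Gauge.
Variables (R : realType) (X : normedModType R) (W : set X) (r : R).
Hypothesis Wopen : opn W.
Hypothesis Wconv : is_convex_set W.
Hypothesis r0 : 0 < r.
Hypothesis Wball : forall v, `|v| < r -> W v.

Definition gS (v : X) := [set t : R | 0 < t /\ W (t^-1 *: v)].
Definition gauge (v : X) := inf (gS v).

Lemma gS_in v t : 0 < t -> `|v| < t * r -> gS v t.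
Proof.
move=> t0 h; split=> //; apply: Wball; rewrite normrZ gtr0_norm ?invr_gt0 //.
have hi : t * t^-1 = 1 by rewrite mulfV ?gt_eqF.
have := inv_pos t0; have := normr_ge0 v; nra.
Qed.

Lemma gS_ne v : gS v !=set0.
Proof.
exists (2 * (`|v| + 1) / r); apply: gS_in.
  by apply: divr_gt0 => //; have := normr_ge0 v; lra.
rewrite divfK ?gt_eqF //; have := normr_ge0 v; lra.
Qed.

Lemma gS_lb v : lbound (gS v) 0.
Proof. by move=> t [t0 _]; exact: ltW. Qed.

Lemma has_inf_gS v : has_inf (gS v).
Proof. by split; [exact: gS_ne|exists 0; exact: gS_lb]. Qed.

Lemma gauge_le v t : gS v t -> gauge v <= t.
Proof. by move=> h; apply: ge_inf => //; exists 0; exact: gS_lb. Qed.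

Lemma gauge_ge0 v : 0 <= gauge v.
Proof. by apply: lb_le_inf; [exact: gS_ne|exact: gS_lb]. Qed.

Lemma gauge_bound v : gauge v <= `|v| / r.
Proof.
have h0 : 0 <= `|v| / r by apply: divr_ge0; [exact: normr_ge0|exact: ltW].
apply/ler_addgt0Pr => e e0; apply: gauge_le; apply: gS_in; first lra.
rewrite mulrDl divfK ?gt_eqF //; have := mulr_gt0 e0 r0; lra.
Qed.

Lemma gauge_scale t v : 0 < t -> gauge (t *: v) <= t * gauge v.
Proof.
move=> t0.
suff : t^-1 * gauge (t *: v) <= gauge v.
  by move=> h; rewrite -(ler_pM2l (inv_pos t0)) mulrA mulVf ?gt_eqF // mul1r.
apply: lb_le_inf; first exact: gS_ne.
move=> s [s0 Ws].
have : gauge (t *: v) <= t * s.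
  apply: gauge_le; split; first exact: mulr_gt0.
  by rewrite scalerA invfM mulrAC mulVf ?gt_eqF // mul1r.
by move=> h; rewrite mulrC ler_pdivrMr // mulrC.
Qed.

Lemma gauge_add x y : gauge (x + y) <= gauge x + gauge y.
Proof.
suff : gauge (x + y) - gauge y <= gauge x by lra.
apply: lb_le_inf; first exact: gS_ne.
move=> s [s0 Ws].
suff : gauge (x + y) - s <= gauge y by lra.
apply: lb_le_inf; first exact: gS_ne.
move=> u [u0 Wu].
suff : gauge (x + y) <= s + u by lra.
apply: gauge_le; split; first by lra.
have su0 : 0 < s + u by lra.
have := Wconv _ _ (s / (s + u)) Ws Wu.
have e : s / (s + u) *: (s^-1 *: x) + (1 - s / (s + u)) *: (u^-1 *: y) =
   (s + u)^-1 *: (x + y).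
  have -> : 1 - s / (s + u) = u / (s + u).
    by field; rewrite gt_eqF.
  rewrite !scalerA scalerDr; congr (_ *: _ + _ *: _).
    by rewrite mulrC mulrA mulVf ?gt_eqF // mul1r.
  by rewrite mulrC mulrA mulVf ?gt_eqF // mul1r.
rewrite e; apply.
  by apply: divr_ge0; lra.
by rewrite ler_pdivrMr // mul1r; lra.
Qed.

Lemma gauge_lt1 v : W v -> gauge v < 1.
Proof.
move=> Wv; have [rho rho0 hb] := Wopen _ Wv.
pose eta := rho / (`|v| + 1).
have nv := normr_ge0 v.
have eta0 : 0 < eta by apply: divr_gt0; lra.
have ev : eta * `|v| < rho.
  rewrite /eta mulrAC ltr_pdivrMr; [nra|lra].
have hS : gS v ((1 + eta)^-1).
  split; first by rewrite invr_gt0; lra.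
  rewrite invrK; apply: hb.
  by rewrite scalerDl scale1r opprD addrA subrr sub0r normrN normrZ gtr0_norm.
apply: (le_lt_trans (gauge_le _ _ hS)).
rewrite invf_lt1; lra.
Qed.

Lemma gauge_ge1 w : W 0 -> ~ W w -> 1 <= gauge w.
Proof.
move=> W0 nW; rewrite leNgt; apply/negP => g1.
have e0 : 0 < 1 - gauge w by lra.
have [t [t0 Wt] tlt] := inf_adherent e0 (has_inf_gS w).
have tl1 : t <= 1 by move: tlt; rewrite /gauge; lra.
apply: nW; have := Wconv _ _ t Wt W0 (ltW t0) tl1.
by rewrite scalerA mulfV ?gt_eqF // scale1r scaler0 addr0.
Qed.

End Gauge.
Arguments gS {R X}. Arguments gauge {R X}.
Arguments gauge_ge0 {R X W r}. Arguments gauge_add {R X W r}.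
Arguments gauge_scale {R X W r}. Arguments gauge_lt1 {R X W}.
Arguments gauge_ge1 {R X W r}. Arguments gauge_bound {R X W r}.

Lemma bound_cont (R : realType) (X : normedModType R) (f : X -> R) (K : R) :
  (forall a x y, f (a *: x + y) = a * f x + f y) ->
  (forall v, `|f v| <= K * `|v|) -> continuous f.
Proof.
move=> flin fb x; apply/cvgrPdist_lt => e e0.
have K1 : 0 < `|K| + 1 by have := normr_ge0 K; lra.
apply/nbhs_ballP; exists (e / (`|K| + 1)); first exact: divr_gt0.
move=> y; rewrite -ball_normE /= => hy.
rewrite -(linB flin); apply: (le_lt_trans (fb _)).
have hK : K <= `|K| := ler_norm K.
have := normr_ge0 (x - y).
move: hy; rewrite ltr_pdivlMr // => hy.
nra.
Qed.

Lemma separate {R : realType} {X : normedModType R} {U : set X} {x0 q : X} :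
  opn U -> is_convex_set U -> U x0 -> ~ U q ->
  exists f : X -> R, [/\ (forall a x y, f (a *: x + y) = a * f x + f y),
    (exists K, forall v, `|f v| <= K * `|v|) & (forall u, U u -> f u < f q)].
Proof.
move=> Uo Uc Ux0 nUq.
pose W := [set v | U (x0 + v)].
have Wo : opn W.
  move=> v Wv; have [rho rho0 hb] := Uo _ Wv; exists rho => // w hw.
  by apply: hb; rewrite /W /= opprD addrACA subrr add0r.
have Wc : is_convex_set W.
  move=> a b t Wa Wb t0 t1; have := Uc _ _ t Wa Wb t0 t1.
  rewrite /W /= !scalerDr addrACA -scalerDl (addrC t) subrK scale1r //.
have [r0 r0p hr] := Uo _ Ux0.
have Wb : forall v, `|v| < r0 -> W v.
  by move=> v hv; apply: hr; rewrite opprD addrA subrr sub0r normrN.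
have W0 : W 0 by rewrite /W /= addr0.
have [f [flin fle fq]] := @HB_exists _ _ (gauge W) (gauge_ge0 r0p Wb) (gauge_add Wc r0p Wb)
   (gauge_scale r0p Wb) (q - x0).
exists f; split => //.
- exists r0^-1 => v; rewrite ler_norml; apply/andP; split.
    have := fle (- v); rewrite (linN flin) => h1.
    have := gauge_bound r0p Wb (- v); rewrite normrN (mulrC _ (`|v|)) => h2.
    lra.
  have := fle v => h1; have := gauge_bound r0p Wb v; rewrite (mulrC _ (`|v|)); lra.
- move=> u Uu.
  have h1 : 1 <= gauge W (q - x0).
    apply: (gauge_ge1 Wc r0p Wb) => //.
    by rewrite /W /= (addrC x0) subrK.
  have h2 : gauge W (u - x0) < 1.
    by apply: gauge_lt1 => //; rewrite /W /= (addrC x0) subrK.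
  have := fle (u - x0); rewrite !(linB flin) in fq *; lra.
Qed.

Lemma seg_real (R : realType) (a b M : R) :
  (forall t, 0 < t -> t <= 1 -> t * a + (1 - t) * b <= M) -> b <= M.
Proof.
move=> h; apply/ler_addgt0Pr => e e0.
pose k := `|a - b|.
have k0 : 0 <= k := normr_ge0 _.
have ke : 0 < k + e by lra.
pose t := e / (k + e).
have ht : t * (k + e) = e by rewrite /t divfK ?gt_eqF.
have t0 : 0 < t by apply: divr_gt0.
have t1 : t <= 1 by rewrite /t ler_pdivrMr // mul1r; lra.
have := h t t0 t1.
have hk : - k <= a - b by rewrite lerNl opprB /k distrC; exact: ler_norm.
nra.
Qed.

Lemma forall_gt_le {R : realType} {a mu : R} : (forall r, 0 < r -> a < mu * r) -> a <= 0.
Proof.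
move=> h; rewrite leNgt; apply/negP => a0.
case: (lerP mu 0) => m0.
  by have := h 1 ltr01; nra.
have h1 : 0 < a / (mu + 1) by apply: divr_gt0; lra.
have := h _ h1.
have e : a / (mu + 1) * (mu + 1) = a by rewrite divfK // gt_eqF //; lra.
nra.
Qed.

Lemma is_dual_bound {R : realType} {X : normedModType R} {f : X -> R} {K : R} :
  (forall a x y, f (a *: x + y) = a * f x + f y) ->
  (forall v, `|f v| <= K * `|v|) -> is_dual f.
Proof. by move=> fl fb; split => //; exact: bound_cont fb. Qed.

Lemma is_dual_scale {R : realType} {X : normedModType R} {f : X -> R} (k : R) :
  is_dual f -> is_dual (fun x => k * f x).
Proof.
move=> [fl fc]; split.
  by move=> a x y; rewrite fl mulrDr mulrCA.
by move=> x; apply: continuousM; [exact: cvg_cst|exact: fc].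
Qed.

Lemma is_dual_add {R : realType} {X : normedModType R} {f g : X -> R} :
  is_dual f -> is_dual g -> is_dual (fun x => f x + g x).
Proof.
move=> [fl fc] [gl gc]; split.
  by move=> a x y; rewrite fl gl mulrDr addrACA.
by move=> x; apply: continuousD; [exact: fc|exact: gc].
Qed.

Lemma is_dual_sub {R : realType} {X : normedModType R} {f g : X -> R} :
  is_dual f -> is_dual g -> is_dual (fun x => f x - g x).
Proof.
move=> hf hg; have := is_dual_add hf (is_dual_scale (-1) hg).
by congr is_dual; apply: funext => x; rewrite mulN1r.
Qed.

Lemma comb_same {R : realType} {V : lmodType R} (v : V) (t : R) :
  t *: v + (1 - t) *: v = v.
Proof. by rewrite -scalerDl addrC subrK scale1r. Qed.

Lemma comb_shift {R : realType} {V : lmodType R} (a b d : V) (t : R) :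
  t *: (a + d) + (1 - t) *: (b + d) = t *: a + (1 - t) *: b + d.
Proof. by rewrite !scalerDr addrACA comb_same. Qed.

Section Main.
Variables (R : realType) (X : normedModType R) (A : operator X) (C : set X).
Hypotheses (Amm : maximal_monotone A) (Asv : at_most_single_valued A)
  (Ccl : closed C) (Ccv : is_convex_set C) (Ads : dom_subspace A)
  (Alin : linear_on_dom A).
Variables (x0 : X) (f0 : X -> R) (delta : R).
Hypotheses (Ax0 : A x0 f0) (d0 : 0 < delta)
  (x0ball : forall y, `|x0 - y| < delta -> C y).

Lemma Adual {x f} : A x f -> is_dual f.
Proof. by case: Amm => h _; exact: h. Qed.

Lemma Amon {x y f g} : A x f -> A y g -> 0 <= f (x - y) - g (x - y).
Proof. by case: Amm => _ [h _]; exact: h. Qed.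

Lemma A00 : A 0 (fun _ => 0).
Proof.
have := Alin (-1) _ _ _ _ Ax0 Ax0; rewrite scaleN1r addNr.
by congr (A 0); apply: funext => z; rewrite mulN1r addNr.
Qed.

Lemma Ascale a {x f} : A x f -> A (a *: x) (fun z => a * f z).
Proof.
move=> h; have := Alin a _ _ _ _ h A00; rewrite addr0.
by congr (A _); apply: funext => z; rewrite addr0.
Qed.

Lemma Acomb a b {x y f g} : A x f -> A y g ->
  A (a *: x + b *: y) (fun z => a * f z + b * g z).
Proof. by move=> hx hy; exact: (Alin a _ _ _ _ hx (Ascale b hy)). Qed.

Lemma domcomb a b {x y} : dom A x -> dom A y -> dom A (a *: x + b *: y).
Proof. by move=> [f hf] [g hg]; exists (fun z => a * f z + b * g z); exact: Acomb. Qed.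

Lemma int_ball u : interior C u <-> exists2 r, 0 < r & forall y, `|u - y| < r -> C y.
Proof.
rewrite /interior; split.
  move=> /nbhs_ballP [r r0 hb]; exists r => // y hy; apply: hb.
  by rewrite -ball_normE /=.
move=> [r r0 hb]; apply/nbhs_ballP; exists r => // y; rewrite -ball_normE /=.
exact: hb.
Qed.

Lemma int_open : opn (interior C).
Proof.
move=> u /int_ball [r r0 hb]; exists (r / 2); first by apply: divr_gt0.
move=> y hy; apply/int_ball; exists (r / 2); first by apply: divr_gt0.
move=> w hw; apply: hb.
have := ler_normD (u - y) (y - w); rewrite addrA subrK => h.
have : `|u - y| + `|y - w| < r / 2 + r / 2 by rewrite ltrD.
rewrite -splitr; exact: le_lt_trans.
Qed.

Lemma int_conv : is_convex_set (interior C).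
Proof.
move=> a b t /int_ball [r1 r10 h1] /int_ball [r2 r20 h2] t0 t1.
apply/int_ball; exists (Num.min r1 r2); first by rewrite lt_min r10 r20.
move=> y; rewrite lt_min => /andP [hy1 hy2].
pose d := y - (t *: a + (1 - t) *: b).
have e : y = t *: (a + d) + (1 - t) *: (b + d).
  by rewrite comb_shift /d addrC subrK.
rewrite e; apply: Ccv => //.
  by apply: h1; rewrite opprD addrA subrr sub0r normrN /d distrC.
by apply: h2; rewrite opprD addrA subrr sub0r normrN /d distrC.
Qed.

Lemma x0int : interior C x0.
Proof. by apply/int_ball; exists delta. Qed.

Lemma seg_int {c t} : C c -> 0 < t -> t <= 1 -> interior C (t *: x0 + (1 - t) *: c).
Proof.
move=> Cc t0 t1; apply/int_ball; exists (t * delta); first exact: mulr_gt0.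
move=> y hy.
have e : y = t *: (x0 + t^-1 *: (y - (t *: x0 + (1 - t) *: c))) + (1 - t) *: c.
  rewrite scalerDr scalerA mulfV ?gt_eqF // scale1r (addrC (t *: x0)) -!addrA.
  by rewrite addNr addr0.
rewrite e; apply: Ccv => //; last by apply: ltW.
apply: x0ball.
rewrite opprD addrA subrr sub0r normrN normrZ gtr0_norm ?invr_gt0 //.
by rewrite distrC mulrC ltr_pdivrMr // mulrC.
Qed.

Lemma extend_ineq (l : X -> R) (M : R) :
  (forall a x y, l (a *: x + y) = a * l x + l y) ->
  (forall u, interior C u -> l u <= M) -> forall c, C c -> l c <= M.
Proof.
move=> ll hu c Cc; apply: (@seg_real _ (l x0)) => t t0 t1.
have := hu _ (seg_int Cc t0 t1).
by rewrite (linD ll) !(linZ ll).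
Qed.

Lemma zero_dual : is_dual (fun _ : X => (0 : R)).
Proof.
split; first by move=> a x y; rewrite mulr0 addr0.
by move=> x; exact: cvg_cst.
Qed.

Lemma domscale k {y} : dom A y -> dom A (k *: y).
Proof. by move=> [f hf]; exists (fun z => k * f z); exact: Ascale. Qed.

Lemma dens w e : 0 < e -> exists y, dom A y /\ `|w - y| < e.
Proof.
move=> e0; apply: contrapT => hn.
have far : forall y, dom A y -> e <= `|w - y|.
  move=> y hy; rewrite leNgt; apply/negP => h; apply: hn; by exists y.
pose U := [set v | exists y d, [/\ dom A y, `|d| < e & v = y + d]].
have Uo : opn U.
  move=> v [y [d [hy hd ->]]]; exists (e - `|d|); first by rewrite subr_gt0.
  move=> v' hv'; exists y, (v' - y); split=> //; last by rewrite addrC subrK.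
  have := ler_normD (v' - (y + d)) d; rewrite (distrC v' (y + d)) opprD addrA subrK.
  lra.
have Uc : is_convex_set U.
  move=> a b t [y1 [d1 [h1 n1 ->]]] [y2 [d2 [h2 n2 ->]]] t0 t1.
  exists (t *: y1 + (1 - t) *: y2), (t *: d1 + (1 - t) *: d2); split.
  - exact: domcomb.
  - apply: (le_lt_trans (ler_normD _ _)); rewrite !normrZ !ger0_norm //; last by lra.
    have k1 : t * `|d1| <= t * e by rewrite ler_wpM2l //; exact: ltW.
    have [tl|te] := ltP t 1.
      have : (1 - t) * `|d2| < (1 - t) * e by rewrite ltr_pM2l // subr_gt0.
      lra.
    have -> : t = 1 by apply/eqP; rewrite eq_le t1 te.
    by rewrite subrr mul0r addr0 mul1r.
  - by rewrite !scalerDr addrACA.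
have U0 : U 0 by exists 0, 0; split; [exact: Ads.1|rewrite normr0|rewrite addr0].
have nUw : ~ U w.
  move=> [y [d [hy hd ew]]]; have := far y hy.
  by rewrite ew (addrC y) addrK; lra.
have [f [flin [K fb] fl]] := separate Uo Uc U0 nUw.
have fd : is_dual f := is_dual_bound flin fb.
have f0dom : forall y, dom A y -> f y = 0.
  move=> y hy; apply/eqP; apply: contraT => hne.
  have hU : U (((`|f w| + 1) / f y) *: y).
    by exists (((`|f w| + 1) / f y) *: y), 0; split; [exact: domscale|rewrite normr0|rewrite addr0].
  have := fl _ hU; rewrite (linZ flin) divfK //.
  have := ler_norm (f w); lra.
have fpos : forall x h, A x h -> 0 <= h x.
  move=> x h Ah; have := Amon Ah A00; by rewrite subr0 subr0.
case: Amm => _ [_ Amax].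
pose B := fun x h => A x h \/ (x = 0 /\ h = f).
have hB : B 0 f by right.
have Af : A 0 f.
  apply: (Amax B _ _ _ 0 f hB).
  - by move=> x h [/Adual //|[_ ->]].
  - move=> x y g h [Ax|[-> ->]] [Ay|[-> ->]].
    + exact: Amon.
    + rewrite subr0 (f0dom x); first by rewrite subr0; exact: fpos Ax.
      by exists g.
    + rewrite sub0r (linN flin) (linN (Adual Ay).1) (f0dom y); last by exists h.
      by rewrite oppr0 sub0r opprK; exact: fpos Ay.
    + by rewrite subrr.
  - by move=> x h Ah; left.
have := Asv _ _ _ Af A00 => ef.
have := fl _ U0; rewrite ef; lra.
Qed.

Lemma x0C : C x0.
Proof. by apply: x0ball; rewrite subrr normr0. Qed.

Lemma diff_seg (a v : X) (s t : R) : a + s *: v - (a + t *: v) = (s - t) *: v.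
Proof. by rewrite opprD addrACA subrr add0r scalerBl. Qed.

Lemma bdry y : ~ C y -> exists s, [/\ 0 <= s, s <= 1, C (x0 + s *: (y - x0))
  & ~ interior C (x0 + s *: (y - x0))].
Proof.
move=> nCy.
pose S := [set t : R | [/\ 0 <= t, t <= 1 & C (x0 + t *: (y - x0))]].
have S0 : S 0 by split; rewrite ?lexx ?ler01 // scale0r addr0; exact: x0C.
have Sub : ubound S 1 by move=> t [].
have hs : has_sup S by split; [exists 0|exists 1].
pose s := sup S.
have s0 : 0 <= s by apply: (ub_le_sup hs.2 S0).
have s1 : s <= 1 by apply: ge_sup => //; exists 0.
pose n := `|y - x0|.
have n0 : 0 <= n := normr_ge0 _.
have Cp : C (x0 + s *: (y - x0)).
  apply: Ccl => B /nbhs_ballP [e e0 hb].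
  have e'0 : 0 < e / (n + 1) by apply: divr_gt0 => //; rewrite /n; have := normr_ge0 (y - x0); lra.
  have [t [t0 t1 Ct] ht] := sup_adherent e'0 hs.
  have ts : t <= s by apply: (ub_le_sup hs.2); split.
  exists (x0 + t *: (y - x0)); split => //; apply: hb; rewrite -ball_normE /=.
  rewrite diff_seg normrZ ger0_norm; last by rewrite subr_ge0.
  have hh : e / (n + 1) * (n + 1) = e by rewrite divfK // gt_eqF //; lra.
  rewrite -/n; rewrite -/s in ht.
  have : (s - t) * (n + 1) < e / (n + 1) * (n + 1) by rewrite ltr_pM2r; lra.
  rewrite hh; nra.
exists s; split => //.
move=> /int_ball [rho rho0 hb].
have [se|sn] := eqVneq s 1.
  by apply: nCy; move: Cp; rewrite se scale1r addrC subrK.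
have sl : s < 1 by rewrite lt_neqAle sn s1.
pose tau := (1 - s) * rho / (rho + n + 1).
have d1 : 0 < rho + n + 1 by lra.
have htau : tau * (rho + n + 1) = (1 - s) * rho by rewrite /tau divfK // gt_eqF.
have tau0 : 0 < tau by apply: divr_gt0 => //; apply: mulr_gt0 => //; lra.
have : S (s + tau).
  split; first by lra.
    by nra.
  apply: hb; rewrite diff_seg opprD addrA subrr sub0r scaleNr normrN normrZ.
  rewrite gtr0_norm // -/n; nra.
move/(ub_le_sup hs.2); rewrite -/s; lra.
Qed.

Definition HMp (z : X) (zs : X -> R) := forall c fc g, C c -> A c fc -> is_dual g ->
  (forall c', C c' -> g (c' - c) <= 0) -> 0 <= zs (z - c) - (fc (z - c) + g (z - c)).

Lemma zC z zs : is_dual zs -> HMp z zs -> C z.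
Proof.
move=> zsd HM; apply: Ccl => B /nbhs_ballP [e /= e0 hb].
suff [c [Cc hc]] : exists c, C c /\ `|z - c| < e.
  by exists c; split => //; apply: hb; rewrite -ball_normE /=.
pose n0 := `|z - x0|.
have n00 : 0 <= n0 := normr_ge0 _.
pose q := (1 + n0) / delta.
have hq : q * delta = 1 + n0 by rewrite /q divfK // gt_eqF.
have q0 : 0 < q by apply: divr_gt0 => //; lra.
clearbody q.
pose K0 := 1 + 2 * q.
have dK : 0 < e + 2 * K0 by rewrite /K0; lra.
pose eta := e / (e + 2 * K0).
have heta : eta * (e + 2 * K0) = e by rewrite /eta divfK // gt_eqF.
have eta0 : 0 < eta by apply: divr_gt0.
clearbody eta.
have [y [dy hzy]] := dens z eta eta0.
have K00 : 1 < K0 by rewrite /K0; lra.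
have eK : 0 < eta * K0 by apply: mulr_gt0 => //; lra.
have etae : eta < e.
  rewrite ltNge; apply/negP => h.
  have : e * e <= eta * e by rewrite ler_pM2r.
  nra.
have eta1 : eta < 1.
  rewrite ltNge; apply/negP => h.
  have : e <= eta * e by rewrite -{1}(mul1r e) ler_pM2r.
  nra.
have [Cy|nCy] := pselect (C y).
  by exists y; split => //; lra.
have [s [s0 s1 Cp nip]] := bdry _ nCy.
set p := x0 + s *: (y - x0) in Cp nip.
have ep : p = (1 - s) *: x0 + s *: y.
  by rewrite /p scalerBr scalerBl scale1r -addrA (addrC (s *: y)).
have [fp Ap] : dom A p by rewrite ep; apply: domcomb => //; exists f0.
have [l [llin [K lK] llt]] := separate int_open int_conv x0int nip.
pose ga := l p - l x0.
have ga0 : 0 < ga by rewrite /ga subr_gt0; exact: llt x0int.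
pose v := fun x => ga^-1 * l x.
have vd : is_dual v := is_dual_scale _ (is_dual_bound llin lK).
have vlin := vd.1.
have vC : forall c, C c -> v c <= v p.
  apply: extend_ineq => // u iu; rewrite /v ler_pM2l ?invr_gt0 //.
  exact: ltW (llt _ iu).
have vp : v (p - x0) = 1 by rewrite (linB vlin) /v -mulrBr mulVf // gt_eqF.
clearbody v.
have vball : forall d, `|d| < delta -> v d <= 1.
  move=> d hd.
  have hd' : `|x0 - (x0 + d)| < delta by rewrite opprD addrA subrr sub0r normrN.
  have := vC _ (x0ball _ hd').
  rewrite (linD vlin); move: vp; rewrite (linB vlin); lra.
have vbound : forall d, v d * delta <= 2 * `|d|.
  move=> d; have [->|dn] := eqVneq d 0.
    by rewrite (lin0 vlin) mul0r normr0 mulr0.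
  have nd : 0 < `|d| by rewrite normr_gt0.
  pose k := delta / (2 * `|d|).
  have hk : k * (2 * `|d|) = delta by rewrite /k divfK // gt_eqF // mulr_gt0.
  have k0 : 0 < k by apply: divr_gt0 => //; apply: mulr_gt0.
  have := vball (k *: d); rewrite (linZ vlin) normrZ gtr0_norm // => h.
  have : k * `|d| < delta by nra.
  move/h => h2; nra.
have vzp : v (z - p) <= 0.
  rewrite leNgt; apply/negP => vpos.
  pose lam := (`|zs (z - p) - fp (z - p)| + 1) / v (z - p).
  have lam0 : 0 <= lam by apply: divr_ge0; [have := normr_ge0 (zs (z - p) - fp (z - p)); lra|exact: ltW].
  have hN : forall c', C c' -> lam * v (c' - p) <= 0.
    move=> c' Cc'; rewrite (linB vlin); have := vC _ Cc'; nra.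
  have := HM p fp (fun x => lam * v x) Cp Ap (is_dual_scale _ vd) hN.
  rewrite /lam divfK ?gt_eqF // => h.
  have := ler_norm (zs (z - p) - fp (z - p)); lra.
have e1 : v (p - x0) = s * v (y - x0).
  by rewrite /p (addrC x0) addrK (linZ vlin).
have e2 : v (y - p) = v (y - x0) - v (p - x0).
  by rewrite -(linB vlin) opprB addrA subrK.
have e3 : v (y - p) = v (y - z) + v (z - p).
  by rewrite -(linD vlin) addrA subrK.
have vyz := vbound (y - z).
have nyz : `|y - z| = `|z - y| by rewrite distrC.
have ey : y - p = (1 - s) *: (y - x0).
  by rewrite /p opprD addrA scalerBl scale1r.
have nyp : `|y - p| = (1 - s) * `|y - x0|.
  by rewrite ey normrZ ger0_norm // subr_ge0.
have nyx : `|y - x0| <= `|z - y| + n0.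
  have := ler_normD (y - z) (z - x0); rewrite addrA subrK nyz //.
have nzp : `|z - p| <= `|z - y| + `|y - p|.
  by have := ler_normD (z - y) (y - p); rewrite addrA subrK.
have b1 : (1 - s) * delta <= 2 * `|z - y|.
  have hv : s * v (y - x0) = 1 by rewrite -e1.
  have : v (y - x0) - 1 <= v (y - z) by rewrite -vp -e2 e3; lra.
  have : (1 - s) <= v (y - x0) - 1.
    have sp : 0 < s.
      rewrite lt_neqAle s0 andbT; apply/negP => /eqP e0'.
      by move: hv; rewrite -e0' mul0r => /eqP; rewrite eq_sym oner_eq0.
    have key : s * ((v (y - x0) - 1) - (1 - s)) = (1 - s) ^+ 2.
      by rewrite !mulrBr hv mulr1; ring.
    have : 0 <= (v (y - x0) - 1) - (1 - s).
      by rewrite -(pmulr_rge0 _ sp) key sqr_ge0.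
    lra.
  rewrite -nyz; nra.
exists p; split => //.
have a0 := normr_ge0 (z - y).
have : (1 - s) * `|y - x0| <= (1 - s) * (1 + n0).
  by apply: ler_wpM2l; [rewrite subr_ge0|lra].
have : (1 - s) <= 2 * q * `|z - y|.
  have e5 : 2 * q * `|z - y| * delta = 2 * `|z - y| * (1 + n0) by rewrite -hq; ring.
  have : (1 - s) * delta <= 2 * q * `|z - y| * delta by rewrite e5; nra.
  by rewrite ler_pM2r.
have : 2 * q * `|z - y| * (1 + n0) <= 2 * q * eta * (1 + n0).
  rewrite ler_pM2r; last by lra.
  by rewrite ler_pM2l; [exact: ltW|lra].
rewrite /K0 in heta; nra.
Qed.

Lemma main_step z zs : is_dual zs -> HMp z zs -> op_sum A (normal_cone C) z zs.
Proof.
move=> zsd HM.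
have Cz := zC z zs zsd HM.
have zlin := zsd.1.
pose g (e : X) (fe : X -> R) := fe (z - e) - zs (z - e).
pose E1 := [set w : X * R | exists fe, A w.1 fe /\ w.2 <= g w.1 fe].
pose U := [set w : X * R | exists u r e s, [/\ interior C u, 0 < r, E1 (e, s)
   & w = (u - e, r - s)]].
have Uo : opn U.
  move=> w [u [r [e [s [iu r0 hE ->]]]]].
  have [rho rho0 hb] := int_open _ iu.
  exists (Num.min rho r); first by rewrite lt_min rho0 r0.
  move=> [a b]; rewrite prod_normE /= lt_min => /andP [h1 h2].
  move: h1 h2; rewrite gt_max => /andP [h1 _]; rewrite gt_max => /andP [_ h2].
  exists (a + e), (b + s), e, s; split => //.
  - by apply: hb; rewrite opprD (addrC (- a)) addrA.
  - have := ler_norm (r - s - b); lra.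
  - by rewrite !addrK.
have E1c : forall e1 s1 e2 s2 t, E1 (e1, s1) -> E1 (e2, s2) -> 0 <= t -> t <= 1 ->
    E1 (t *: e1 + (1 - t) *: e2, t * s1 + (1 - t) * s2).
  move=> e1 s1 e2 s2 t [f1 [A1 h1]] [f2 [A2 h2]] t0 t1 /=.
  exists (fun x => t * f1 x + (1 - t) * f2 x); split; first exact: Acomb.
  move: h1 h2; rewrite /g /=.
  have l1 := (Adual A1).1; have l2 := (Adual A2).1.
  have mono := Amon A1 A2.
  rewrite !(linB l1) !(linB l2) !(linB zlin) in mono *.
  rewrite !(linD l1) !(linD l2) !(linD zlin) !(linZ l1) !(linZ l2) !(linZ zlin).
  move=> h1 h2.
  have hm : 0 <= t * (1 - t) * (f1 e1 - f1 e2 - (f2 e1 - f2 e2)).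
    by apply: mulr_ge0 => //; apply: mulr_ge0 => //; lra.
  have k1 : t * s1 <= t * (f1 z - f1 e1 - (zs z - zs e1)) by apply: ler_wpM2l.
  have k2 : (1 - t) * s2 <= (1 - t) * (f2 z - f2 e2 - (zs z - zs e2)).
    by apply: ler_wpM2l => //; lra.
  nra.
have Uc : is_convex_set U.
  move=> w1 w2 t [u1 [r1 [e1 [s1 [i1 r10 E1' ->]]]]] [u2 [r2 [e2 [s2 [i2 r20 E2' ->]]]]] t0 t1.
  exists (t *: u1 + (1 - t) *: u2), (t * r1 + (1 - t) * r2),
    (t *: e1 + (1 - t) *: e2), (t * s1 + (1 - t) * s2); split.
  - exact: int_conv.
  - have [tl|te] := ltP t 1.
      have : 0 < (1 - t) * r2 by apply: mulr_gt0 => //; lra.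
      have : 0 <= t * r1 by apply: mulr_ge0 => //; lra.
      lra.
    have -> : t = 1 by apply/eqP; rewrite eq_le t1 te.
    by rewrite subrr mul0r addr0 mul1r.
  - exact: E1c.
  - congr (_, _) => /=.
      by rewrite !scalerBr opprD addrACA.
    by rewrite !scalerBr opprD addrACA.
have gx0 : E1 (x0, g x0 f0) by exists f0; split.
have Ux : U (x0 - x0, 1 - g x0 f0).
  by exists x0, 1, x0, (g x0 f0); split => //; exact: x0int.
have nU0 : ~ U 0.
  move=> [u [r [e [s [iu r0 [fe [Ae hs]] e0]]]]].
  case: e0 => /eqP; rewrite eq_sym subr_eq0 => /eqP ue /eqP; rewrite eq_sym subr_eq0 => /eqP rs.
  move: iu r0; rewrite ue rs => iu r0.
  have Ce := interior_subset iu.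
  have := HM e fe _ Ce Ae zero_dual (fun c _ => lexx 0).
  rewrite /g /= in hs; rewrite addr0; lra.
have [F [Flin [K FK] Flt]] := separate Uo Uc Ux nU0.
pose us := fun x : X => F (x, 0).
pose lam := F (0, 1).
have Fdec : forall x r, F (x, r) = us x + r * lam.
  move=> x r; rewrite /us /lam addrC -Flin.
  have -> : ((x, r) : X * R) = r *: ((0 : X), (1 : R)) + (x, 0) => //.
  transitivity ((r *: (0 : X) + x, r * 1 + 0) : X * R) => //.
  by rewrite scaler0 add0r mulr1 addr0.
have uslin : forall a x y, us (a *: x + y) = a * us x + us y.
  move=> a x y; rewrite /us -Flin.
  have -> : ((a *: x + y, 0) : X * R) = a *: (x, 0) + (y, 0) => //.
  transitivity ((a *: x + y, a * 0 + 0) : X * R) => //.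
  by rewrite mulr0 addr0.
have usK : forall x, `|us x| <= K * `|x|.
  move=> x; have := FK (x, 0); rewrite prod_normE /= normr0.
  by rewrite (max_idPl (normr_ge0 x)).
have usd : is_dual us := is_dual_bound uslin usK.
have F0 : F 0 = 0 by exact: (lin0 Flin).
have key0 : forall u e s, interior C u -> E1 (e, s) -> us u - us e - lam * s <= 0.
  move=> u e s iu hE.
  have hr : forall r, 0 < r -> us u - us e - lam * s < (- lam) * r.
    move=> r r0; have hU : U (u - e, r - s) by exists u, r, e, s.
    have := Flt _ hU; rewrite Fdec F0 (linB uslin); nra.
  by apply: (forall_gt_le hr).
clearbody us lam.
have mu0 : 0 <= - lam.
  have hE : E1 (x0, g x0 f0 - 1 - `|g x0 f0|).
    by exists f0; split => //=; have := normr_ge0 (g x0 f0); lra.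
  have := key0 x0 x0 (g x0 f0 - 1 - `|g x0 f0|) x0int hE.
  have := ler_norm (g x0 f0); have := normr_ge0 (g x0 f0); nra.
have mun : - lam != 0.
  apply/negP => /eqP ml.
  have l0 : lam = 0 by rewrite -[lam]opprK ml oppr0.
  have kk : forall u e fe, interior C u -> A e fe -> us u <= us e.
    move=> u e fe iu Ae; have hE : E1 (e, g e fe) by exists fe; split.
    have := key0 u e (g e fe) iu hE.
    by rewrite l0 mul0r subr0 subr_le0.
  have usdom : forall y, dom A y -> us y = 0.
    move=> y hy; apply/eqP; apply: contraT => hne.
    have [fy Ay] := domscale ((us x0 - 1) / us y) hy.
    have := kk _ _ _ x0int Ay; rewrite (linZ uslin) divfK //; lra.
  have usx0 : us x0 = 0 by apply: usdom; exists f0.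
  have small : forall d, `|d| < delta / 2 -> us d <= 0.
    move=> d hd.
    have iu : interior C (x0 + d).
      apply/int_ball; exists (delta / 2); first by apply: divr_gt0.
      move=> y hy; apply: x0ball.
      have := ler_normD (x0 - (x0 + d)) (x0 + d - y).
      rewrite addrA subrK opprD addrA subrr sub0r normrN.
      have : delta / 2 + delta / 2 = delta by rewrite -splitr.
      lra.
    have := kk _ _ _ iu Ax0; rewrite (linD uslin) usx0; lra.
  have usz : forall d, us d = 0.
    move=> d; have [->|dn] := eqVneq d 0; first by rewrite (lin0 uslin).
    have nd : 0 < `|d| by rewrite normr_gt0.
    pose k := delta / (4 * `|d|).
    have k0 : 0 < k by apply: divr_gt0 => //; apply: mulr_gt0.
    have hk : k * `|d| < delta / 2.
      rewrite /k mulrAC ltr_pdivrMr; last by apply: mulr_gt0.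
      rewrite mulrC mulrA; rewrite -subr_gt0.
      have : 0 < delta * `|d| by apply: mulr_gt0.
      lra.
    have h1 := small (k *: d); rewrite (linZ uslin) normrZ gtr0_norm // in h1.
    have h2 := small (- (k *: d)); rewrite (linN uslin) (linZ uslin) normrN normrZ gtr0_norm // in h2.
    have := h1 hk; have := h2 hk; nra.
  have := Flt _ Ux; rewrite F0 Fdec usz l0 mulr0; lra.
have mup : 0 < - lam by rewrite lt_neqAle eq_sym mun mu0.
pose ms := fun x => (- lam)^-1 * us x.
have msd : is_dual ms := is_dual_scale _ usd.
have mslin := msd.1.
have key : forall u e fe, interior C u -> A e fe -> g e fe <= ms e - ms u.
  move=> u e fe iu Ae; have hE : E1 (e, g e fe) by exists fe; split.
  have := key0 u e (g e fe) iu hE.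
  rewrite /ms -mulrBr => h.
  rewrite -(ler_pM2l mup) mulrA mulfV ?gt_eqF // mul1r; lra.
clearbody ms.
have keyz : forall e fe, A e fe -> g e fe <= ms e - ms z.
  move=> e fe Ae; suff : ms z <= ms e - g e fe by lra.
  apply: (@seg_real _ (ms x0)) => t t0 t1.
  have := key _ _ _ (seg_int Cz t0 t1) Ae.
  rewrite (linD mslin) !(linZ mslin); lra.
pose ws := fun x => zs x - ms x.
have wsd : is_dual ws := is_dual_sub zsd msd.
have Azw : A z ws.
  case: Amm => _ [_ Amax].
  pose B := fun x h => A x h \/ (x = z /\ h = ws).
  apply: (Amax B _ _ _ z ws (or_intror (conj erefl erefl))).
  - by move=> x h [/Adual //|[_ ->]].
  - move=> x y h k [Ax|[-> ->]] [Ay|[-> ->]].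
    + exact: Amon.
    + have := keyz _ _ Ax; rewrite /g /ws.
      have hl := (Adual Ax).1.
      rewrite !(linB hl) !(linB zlin) !(linB mslin); lra.
    + have := keyz _ _ Ay; rewrite /g /ws.
      have hl := (Adual Ay).1.
      rewrite !(linB hl) !(linB zlin) !(linB mslin); lra.
    + by rewrite subrr.
  - by move=> x h Ah; left.
have msN : forall c, C c -> ms (c - z) <= 0.
  have hz : forall u, interior C u -> ms u <= ms z.
    move=> u iu; have := key _ _ _ iu Azw.
    rewrite /g /ws subrr !(lin0 zlin) (lin0 mslin); lra.
  move=> c Cc; rewrite (linB mslin); have := extend_ineq ms (ms z) mslin hz c Cc; lra.
exists ws, ms; split; first exact: Azw.
split; first by split.
by apply: funext => x; rewrite /ws /= subrK.
Qed.

End Main.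

Theorem corollary3p2 (R : realType) (X : completeNormedModType R)
  (A : operator X) (C : set X) :
  maximal_monotone A ->
  at_most_single_valued A ->
  C !=set0 -> closed C -> is_convex_set C ->
  dom_subspace A -> linear_on_dom A ->
  (dom A `&` interior C) !=set0 ->
  maximal_monotone (op_sum A (normal_cone C)).
Proof.
move=> Amm Asv _ Ccl Ccv Ads Alin [x0 [[f0 Ax0] ix0]].
have [delta d0 x0ball] := (int_ball R X C x0).1 ix0.
have Amon : monotone A by case: Amm => _ [].
have Adual : into_dual A by case: Amm.
split; [|split].
- move=> x h [f [g [Af [[_ [gd _]] ->]]]].
  exact: is_dual_add (Adual _ _ Af) gd.
- move=> x y h k [f [g [Af [[Cx [gd gN]] ->]]]] [f' [g' [Af' [[Cy [gd' gN']] ->]]]].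
  have := Amon _ _ _ _ Af Af'.
  have := gN _ Cy; have := gN' _ Cx.
  have -> : y - x = - (x - y) by rewrite opprB.
  rewrite (linN gd.1); lra.
- move=> B Bd Bm Bsub z zs Bz.
  apply: (main_step _ _ _ _ Amm Asv Ccl Ccv Ads Alin _ _ _ Ax0 d0 x0ball z zs (Bd _ _ Bz)).
  move=> c fc g Cc Ac gd gN.
  have Bc : B c (fun x => fc x + g x).
    by apply: Bsub; exists fc, g; split => //; split => //.
  exact: Bm _ _ _ _ Bz Bc.
Qed.
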